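(* Let $n\ge1$. For integers $1\le k\le n$ let $$S_k=\binom{n}{k}\frac{(2n-2)!}{2^{n-1}(k-1)!},$$ and let $k_0=\sqrt{n+1}-1$. Then: - $S_k\le S_{k+1}$ for every integer $k$ with $1\le k\le k_0$; - $S_k>S_{k+1}$ for every integer $k$ with $k_0<k<2k_0$; - $S_k>2S_{k+1}$ for every integer $k$ with $2k_0\le k\le n$. Here $S_{n+1}:=0$, consistent with $\binom{n}{n+1}=0$. *)

(* Defs.v *)
From mathcomp Require Import all_boot all_order all_algebra.
From mathcomp Require Import reals.
Set Implicit Arguments. Unset Strict Implicit. Unset Printing Implicit Defensive.
Import Order.TTheory GRing.Theory Num.Theory.
Local Open Scope ring_scope.

(* S_k = C(n,k) * (2n-2)! / (2^(n-1) * (k-1)!) as a real number.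
   For k = n+1, 'C(n, n+1) = 0 so Sval R n n.+1 = 0, matching S_{n+1} := 0. *)
Definition Sval (R : realType) (n k : nat) : R :=
  ('C(n, k) * (2 * n - 2)`!)%:R / (2 ^ (n - 1) * (k - 1)`!)%:R.

Definition k0 (R : realType) (n : nat) : R := Num.sqrt (n.+1)%:R - 1.

(* Main.v *)
Require Import Defs.
From mathcomp Require Import all_boot all_order all_algebra.
From mathcomp Require Import reals.
From mathcomp Require Import ring lra zify.
Import Order.TTheory GRing.Theory Num.Theory.
Local Open Scope ring_scope.

Lemma Sval_pos (R : realType) n k : (1 <= k <= n)%N -> 0 < Sval R n k.
Proof.
move=> /andP[k1 kn]; rewrite /Sval divr_gt0 // ltr0n ?muln_gt0 ?bin_gt0 ?fact_gt0 ?expn_gt0 ?kn //.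
Qed.

Lemma Sval_rec (R : realType) n k : (1 <= k)%N ->
  Sval R n k.+1 * (k * k.+1)%:R = Sval R n k * (n - k)%:R.
Proof.
case: k => [//|k] _.
have H : (k.+2 * 'C(n, k.+2) = (n - k.+1) * 'C(n, k.+1))%N by rewrite mul_bin_left.
rewrite /Sval !subSS !subn0 factS.
set A := ((2 * n - 2)`!)%N.
set B := (2 ^ (n - 1))%N.
have HB : (B%:R : R) != 0 by rewrite pnatr_eq0 -lt0n expn_gt0.
have HF : ((k`!)%:R : R) != 0 by rewrite pnatr_eq0 -lt0n fact_gt0.
have H1 : (k.+1%:R : R) != 0 by rewrite pnatr_eq0.
have H' : (k.+2%:R * ('C(n, k.+2))%:R = (n - k.+1)%:R * ('C(n, k.+1))%:R :> R).
  by rewrite -!natrM H.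
rewrite !natrM.
transitivity (((k.+2 * 'C(n, k.+2))%N)%:R * A%:R / (B%:R * (k`!)%:R) : R).
  rewrite natrM; field; by rewrite ?HB ?HF ?nat1r ?H1.
rewrite H natrM; field; by rewrite ?HB ?HF ?nat1r ?H1.
Qed.

Theorem propositionA1 (R : realType) (n : nat) (hn : (1 <= n)%N) :
  (forall k : nat, (1 <= k <= n)%N -> k%:R <= k0 R n ->
     Sval R n k <= Sval R n k.+1) /\
  (forall k : nat, (1 <= k <= n)%N -> k0 R n < k%:R -> k%:R < 2 * k0 R n ->
     Sval R n k > Sval R n k.+1) /\
  (forall k : nat, (1 <= k <= n)%N -> 2 * k0 R n <= k%:R ->
     Sval R n k > 2 * Sval R n k.+1).
Proof.
set s := Num.sqrt (n.+1%:R : R).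
have s0 : 0 <= s by apply: sqrtr_ge0.
have s2 : s * s = n.+1%:R.
  by rewrite -expr2 sqr_sqrtr // ler0n.
rewrite /k0 -/s.
split; [|split].
- move=> k /andP[k1 kn] hk.
  have kR : (0 : R) <= k%:R by rewrite ler0n.
  have hk2 : (k.+1 * k.+1)%:R <= (n.+1)%:R :> R.
    by rewrite natrM -s2 -natr1; nra.
  rewrite ler_nat in hk2.
  have hn' : (k * k.+1 <= n - k)%N by nia.
  have P : 0 < Sval R n k by apply: Sval_pos; rewrite k1 kn.
  have kp : (0 : R) < (k * k.+1)%:R by rewrite ltr0n muln_gt0 k1.
  rewrite -(ler_pM2r kp) Sval_rec //.
  by rewrite ler_pM2l // ler_nat.
- move=> k /andP[k1 kn] hk _.
  have kR : (0 : R) <= k%:R by rewrite ler0n.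
  have hk2 : (n.+1)%:R < (k.+1 * k.+1)%:R :> R.
    by rewrite natrM -s2 -natr1; nra.
  rewrite ltr_nat in hk2.
  have hn' : (n - k < k * k.+1)%N by nia.
  have P : 0 < Sval R n k by apply: Sval_pos; rewrite k1 kn.
  have kp : (0 : R) < (k * k.+1)%:R by rewrite ltr0n muln_gt0 k1.
  rewrite -(ltr_pM2r kp) Sval_rec //.
  by rewrite ltr_pM2l // ltr_nat.
- move=> k /andP[k1 kn] hk.
  have kR : (0 : R) <= k%:R by rewrite ler0n.
  have hk2 : (4 * n.+1)%:R <= (k.+2 * k.+2)%:R :> R.
    by rewrite !natrM -s2 -[k.+2]addn2 natrD; nra.
  rewrite ler_nat in hk2.
  have hn' : (2 * (n - k) < k * k.+1)%N by nia.
  have P : 0 < Sval R n k by apply: Sval_pos; rewrite k1 kn.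
  have kp : (0 : R) < (k * k.+1)%:R by rewrite ltr0n muln_gt0 k1.
  rewrite -(ltr_pM2r kp) -mulrA Sval_rec // mulrCA -natrM.
  by rewrite ltr_pM2l // ltr_nat.
Qed.
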